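(* (a) With $q_n=t_n-1$ and $r_n=t_n+\tfrac13$ for $n\ge0$ (i.e. $q_n\in\{-1,0\}$, $r_n\in\{\tfrac13,\tfrac43\}$ according as $t_n=0$ or $1$): $$5\sum_{n\ge1}\frac{q_{n-1}}{n^2}=-3\sum_{n\ge1}\frac{r_n}{n^2}.$$ (b) With $q_n=t_n-1$ and $r_n=t_n+\tfrac97$ for $n\ge0$: $$\sum_{n\ge1}\frac{9q_{n-1}+7r_n}{n^3}=8\zeta(3).$$ (c) With $q_n=t_n-\sqrt2$ and $r_n=t_n+\frac{17\sqrt2-2}{15}$ for $n\ge0$ (i.e. $q_n\in\{-\sqrt2,1-\sqrt2\}$, $r_n\in\{\frac{17\sqrt2-2}{15},\frac{17\sqrt2+13}{15}\}$): $$\sum_{n\ge1}\frac{17q_{n-1}+15r_n}{n^4}=16\,\eta(4).$$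
   Context: For $n\ge 0$, let $t_n\in\{0,1\}$ denote the sum of the binary digits of $n$ reduced modulo $2$ (so $t_0=0$; this is the Thue–Morse sequence). $\zeta(s)=\sum_{n\ge1}n^{-s}$ is the Riemann zeta function and $\eta(s)=\sum_{n\ge1}(-1)^{n-1}n^{-s}$ is the Dirichlet eta function. *)

(* Defs.v *)
From Stdlib Require Import Reals ZArith NArith.
From Coquelicot Require Import Coquelicot.
Open Scope R_scope.

Fixpoint pos_tm (p : positive) : bool :=
  match p with
  | xH => true
  | xO p' => pos_tm p'
  | xI p' => negb (pos_tm p')
  end.

(* Thue–Morse sequence t_n in {0,1}: binary digit sum of n mod 2 (t_0 = 0). *)
Definition tm_bool (n : nat) : bool :=
  match N.of_nat n with
  | N0 => false
  | Npos p => pos_tm p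
  end.

Definition t (n : nat) : R := if tm_bool n then 1 else 0.

Definition zeta (s : nat) : R := Series (fun n : nat => / (INR (n + 1)) ^ s).

(* Dirichlet eta at a positive integer s: sum_{n>=1} (-1)^{n-1} n^{-s}. *)
Definition eta (s : nat) : R := Series (fun n : nat => (-1) ^ n / (INR (n + 1)) ^ s).

(* Main.v *)
Require Import Defs.
From Stdlib Require Import Reals.
From Coquelicot Require Import Coquelicot.
From Stdlib Require Import NArith Lia Lra.
Open Scope R_scope.

Lemma tm_even n : tm_bool (2*n) = tm_bool n.
Proof. unfold tm_bool. rewrite Nat2N.inj_double. destruct (N.of_nat n); reflexivity. Qed.

Lemma tm_odd n : tm_bool (2*n+1) = negb (tm_bool n).
Proof. unfold tm_bool. replace (2*n+1)%nat with (S (2*n)) by lia.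
rewrite Nat2N.inj_succ_double. destruct (N.of_nat n); reflexivity. Qed.

Lemma t_even n : t (2*n) = t n.
Proof. unfold t. rewrite tm_even. reflexivity. Qed.

Lemma t_odd n : t (2*n+1) = 1 - t n.
Proof. unfold t. rewrite tm_odd. destruct (tm_bool n); simpl; lra. Qed.

Lemma t_bound n : 0 <= t n <= 1.
Proof. unfold t. destruct (tm_bool n); lra. Qed.

Definition u s k := t (k+1) / INR (k+1) ^ s.
Definition v s k := t k / INR (k+1) ^ s.
Definition z s k := / INR (k+1) ^ s.
Definition e s k := (-1) ^ k / INR (k+1) ^ s.

Lemma INRp1_pos k : 0 < INR (k+1).
Proof. apply lt_0_INR. lia. Qed.

Lemma powINR_nz k s : INR (k+1) ^ s <> 0.
Proof. apply pow_nonzero. apply Rgt_not_eq, INRp1_pos. Qed.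

Lemma step s N : u s (2*N+2) + u s (2*N+3) + v s (2*N+2) + v s (2*N+3)
  - z s (2*N+2) - z s (2*N+3) = / 2 ^ s * (u s (N+1) - v s (N+1)).
Proof.
  unfold u, v, z.
  replace (2*N+2+1)%nat with (2*(N+1)+1)%nat by lia.
  replace (2*N+3+1)%nat with (2*(N+1+1))%nat by lia.
  replace (2*N+2)%nat with (2*(N+1))%nat by lia.
  replace (2*N+3)%nat with (2*(N+1)+1)%nat by lia.
  rewrite t_odd, !t_even, mult_INR, Rpow_mult_distr.
  replace (INR 2) with 2 by (simpl; ring).
  pose proof (powINR_nz (2*(N+1)) s). pose proof (powINR_nz (N+1) s).
  assert (2 ^ s <> 0) by (apply pow_nonzero; lra).
  field. auto.
Qed.

Lemma fin s N : sum_f_R0 (u s) (2*N+1) + sum_f_R0 (v s) (2*N+1) - sum_f_R0 (z s) (2*N+1)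
  = / 2 ^ s * (sum_f_R0 (u s) N - sum_f_R0 (v s) N).
Proof.
  induction N.
  - simpl. unfold u, v, z. simpl.
    replace (t 0) with 0 by (unfold t; reflexivity).
    replace (t 1) with 1 by (unfold t; reflexivity).
    replace (t 2) with 1 by (unfold t; reflexivity).
    rewrite !pow1.
    replace (1+1) with 2 by ring.
    assert (2 ^ s <> 0) by (apply pow_nonzero; lra). field. auto.
  - replace (2 * S N + 1)%nat with (S (S (2*N+1))) by lia.
    rewrite !tech5.
    replace (S (S (2*N+1))) with (2*N+3)%nat by lia.
    replace (S (2*N+1)) with (2*N+2)%nat by lia.
    try replace (S N) with (N+1)%nat by lia.
    pose proof (step s N). lra.
Qed.

Lemma fin_eta s N : sum_f_R0 (e s) (2*N+1) =
  sum_f_R0 (z s) (2*N+1) - 2 / 2 ^ s * sum_f_R0 (z s) N.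
Proof.
  assert (2 ^ s <> 0) by (apply pow_nonzero; lra).
  induction N.
  - simpl. unfold e, z. simpl. rewrite !pow1. replace (1+1) with 2 by ring. field. auto.
  - replace (2 * S N + 1)%nat with (S (S (2*N+1))) by lia.
    rewrite !tech5, IHN.
    unfold e, z.
    replace (S (S (2*N+1))) with (S (2*(N+1)))%nat by lia.
    replace (S (2*N+1)) with (2*(N+1))%nat by lia.
    rewrite pow_1_odd, pow_1_even.
    replace (S (2 * (N + 1)) + 1)%nat with (2*(S N+1))%nat by lia.
    rewrite mult_INR, Rpow_mult_distr. replace (INR 2) with 2 by (simpl; ring).
    pose proof (powINR_nz (2*(N+1)) s). pose proof (powINR_nz (S N) s).
    field. auto.
Qed.

Lemma tel_sum N : sum_f_R0 (fun k => 2 * (/ INR (k+1) - / INR (k+2))) N = 2 - 2 / INR (N+2).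
Proof.
  induction N.
  - simpl. field.
  - rewrite tech5, IHN.
    replace (S N + 1)%nat with (N+2)%nat by lia.
    replace (S N + 2)%nat with (N+3)%nat by lia.
    assert (0 < INR (N+2)) by (apply lt_0_INR; lia).
    assert (0 < INR (N+3)) by (apply lt_0_INR; lia).
    field. lra.
Qed.

Lemma lim_sum a (l : R) : is_lim_seq (fun N => sum_f_R0 a N) l -> is_series a l.
Proof.
  intro H. apply (is_lim_seq_ext _ (sum_n a)) in H.
  - exact H.
  - intros; now rewrite sum_n_Reals.
Qed.

Lemma ex_z2 : ex_series (z 2).
Proof.
  apply (@ex_series_le R_AbsRing R_CompleteNormedModule _ (fun k => 2 * (/ INR (k+1) - / INR (k+2)))).
  - intro n. unfold norm; simpl; unfold abs; simpl. unfold z.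
    replace (INR (n+2)) with (INR (n+1) + 1)
      by (rewrite !plus_INR; simpl; ring).
    assert (1 <= INR (n+1)) by (rewrite plus_INR; simpl; pose proof (pos_INR n); lra).
    set (x := INR (n+1)) in *.
    rewrite Rabs_pos_eq.
    2: { apply Rlt_le, Rinv_0_lt_compat, pow_lt; lra. }
    apply Rmult_le_reg_r with (x*x*(x+1)). nra.
    field_simplify; try lra.
  - exists 2. apply lim_sum. apply is_lim_seq_ext with (fun N => 2 - 2 / INR (N+2)).
    + intros; now rewrite tel_sum.
    + assert (H: is_lim_seq (fun N => 2 - 2 / INR (N+2)) (2 - 2*0)).
      2: { replace (2 - 2*0) with 2 in H by ring. exact H. }
      apply is_lim_seq_minus'. apply is_lim_seq_const.
      unfold Rdiv. apply (is_lim_seq_scal_l _ 2 0).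
      replace (Finite 0) with (Rbar_inv p_infty) by reflexivity.
      apply is_lim_seq_inv; [| discriminate].
      apply (is_lim_seq_subseq INR p_infty (fun n => n+2)%nat).
      * intros P [N HN]. exists N. intros. apply HN. lia.
      * apply is_lim_seq_INR.
Qed.

Lemma ex_bound (c : nat -> R) M s : (2 <= s)%nat -> (forall k, Rabs (c k) <= M) ->
  ex_series (fun k => c k / INR (k+1) ^ s).
Proof.
  intros Hs Hc.
  assert (HM : 0 <= M) by (pose proof (Hc 0%nat); pose proof (Rabs_pos (c 0%nat)); lra).
  apply (@ex_series_le R_AbsRing R_CompleteNormedModule _ (fun k => M * z 2 k)).
  - intro n. unfold norm; simpl; unfold abs; simpl. unfold z.
    assert (1 <= INR (n+1)) by (rewrite plus_INR; simpl; pose proof (pos_INR n); lra).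
    set (x := INR (n+1)) in *.
    assert (x ^ 2 <= x ^ s) by (apply Rle_pow; auto).
    assert (0 < x ^ 2) by (apply pow_lt; lra).
    unfold Rdiv. rewrite Rabs_mult, Rabs_inv, (Rabs_pos_eq (x ^ s)) by lra.
    apply Rmult_le_compat; auto.
    + apply Rabs_pos.
    + apply Rlt_le, Rinv_0_lt_compat; lra.
    + apply Rinv_le_contravar; lra.
  - apply (ex_series_scal_l M (z 2)). apply ex_z2.
Qed.

Lemma lim_sub a : ex_series a -> is_lim_seq (fun N => sum_f_R0 a (2*N+1)) (Series a).
Proof.
  intro H. apply Series_correct in H.
  apply is_lim_seq_ext with (fun N => sum_n a (2*N+1)).
  - intros; now rewrite sum_n_Reals.
  - apply (is_lim_seq_subseq (sum_n a) (Series a) (fun N => 2*N+1)%nat).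
    + intros P [N HN]. exists N. intros. apply HN. lia.
    + exact H.
Qed.

Lemma lim_id a : ex_series a -> is_lim_seq (fun N => sum_f_R0 a N) (Series a).
Proof.
  intro H. apply Series_correct in H.
  apply is_lim_seq_ext with (fun N => sum_n a N).
  - intros; now rewrite sum_n_Reals.
  - exact H.
Qed.

Lemma lim_eq (w : nat -> R) (l1 l2 : R) : is_lim_seq w l1 -> is_lim_seq w l2 -> l1 = l2.
Proof.
  intros H1 H2. apply is_lim_seq_unique in H1. apply is_lim_seq_unique in H2.
  rewrite H1 in H2. injection H2. auto.
Qed.

Lemma exu s : (2 <= s)%nat -> ex_series (u s).
Proof. intro. apply (ex_bound _ 1); auto. intro; pose proof (t_bound (k+1)); rewrite Rabs_pos_eq; lra. Qed.
Lemma exv s : (2 <= s)%nat -> ex_series (v s).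
Proof. intro. apply (ex_bound _ 1); auto. intro; pose proof (t_bound k); rewrite Rabs_pos_eq; lra. Qed.
Lemma exz s : (2 <= s)%nat -> ex_series (z s).
Proof. intro. unfold z. apply ex_series_ext with (fun k => 1 / INR (k+1) ^ s).
  - intro n; simpl; unfold Rdiv; ring.
  - apply (ex_bound _ 1); auto. intro; rewrite Rabs_R1; lra. Qed.
Lemma exe s : (2 <= s)%nat -> ex_series (e s).
Proof. intro. apply (ex_bound _ 1); auto. intro; rewrite pow_1_abs; lra. Qed.

Lemma key s : (2 <= s)%nat ->
  Series (u s) + Series (v s) - Series (z s) = / 2 ^ s * (Series (u s) - Series (v s)).
Proof.
  intro Hs.
  apply (lim_eq (fun N => sum_f_R0 (u s) (2*N+1) + sum_f_R0 (v s) (2*N+1) - sum_f_R0 (z s) (2*N+1))).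
  - apply is_lim_seq_minus'. apply is_lim_seq_plus'.
    1-3: apply lim_sub; auto using exu, exv, exz.
  - apply is_lim_seq_ext with (fun N => / 2 ^ s * (sum_f_R0 (u s) N - sum_f_R0 (v s) N)).
    + intro; now rewrite fin.
    + apply (is_lim_seq_scal_l _ _ (Series (u s) - Series (v s))).
      apply is_lim_seq_minus'; apply lim_id; auto using exu, exv.
Qed.

Lemma key_eta s : (2 <= s)%nat ->
  Series (e s) = Series (z s) - 2 / 2 ^ s * Series (z s).
Proof.
  intro Hs.
  apply (lim_eq (fun N => sum_f_R0 (e s) (2*N+1))).
  - apply lim_sub; auto using exe.
  - apply is_lim_seq_ext with (fun N => sum_f_R0 (z s) (2*N+1) - 2 / 2 ^ s * sum_f_R0 (z s) N).
    + intro; now rewrite fin_eta.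
    + apply is_lim_seq_minus'. apply lim_sub; auto using exz.
      apply (is_lim_seq_scal_l _ _ (Series (z s))). apply lim_id; auto using exz.
Qed.

Theorem proposition5 :
  (let q := fun n : nat => t n - 1 in
   let r := fun n : nat => t n + 1 / 3 in
   let A := fun k : nat => q k / (INR (k + 1)) ^ 2 in
   let B := fun k : nat => r (k + 1)%nat / (INR (k + 1)) ^ 2 in
   ex_series A /\ ex_series B /\ 5 * Series A = - 3 * Series B)
  /\
  (let q := fun n : nat => t n - 1 in
   let r := fun n : nat => t n + 9 / 7 in
   let C := fun k : nat => (9 * q k + 7 * r (k + 1)%nat) / (INR (k + 1)) ^ 3 in
   ex_series C /\ Series C = 8 * zeta 3)
  /\
  (let q := fun n : nat => t n - sqrt 2 in
   let r := fun n : nat => t n + (17 * sqrt 2 - 2) / 15 in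
   let D := fun k : nat => (17 * q k + 15 * r (k + 1)%nat) / (INR (k + 1)) ^ 4 in
   ex_series D /\ Series D = 16 * eta 4).
Proof.
  assert (H2 : (2 <= 2)%nat) by lia.
  assert (H3 : (2 <= 3)%nat) by lia.
  assert (H4 : (2 <= 4)%nat) by lia.
  split; [|split]; intros q r.
  { intros A B.
    assert (EA : forall k, A k = v 2 k - z 2 k).
    { intro k; unfold A, q, v, z; pose proof (powINR_nz k 2); assert (0 < INR (k+1)) by (apply lt_0_INR; lia); field; lra. }
    assert (EB : forall k, B k = u 2 k + 1/3 * z 2 k).
    { intro k; unfold B, r, u, z; pose proof (powINR_nz k 2); assert (0 < INR (k+1)) by (apply lt_0_INR; lia); field; lra. }
    split; [|split].
    - apply (ex_series_ext (fun k => v 2 k - z 2 k)); [intro; now rewrite EA|].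
      apply (ex_series_minus (v 2) (z 2)); auto using exv, exz.
    - apply (ex_series_ext (fun k => u 2 k + 1/3 * z 2 k)); [intro; now rewrite EB|].
      apply (ex_series_plus (u 2) (fun k => 1/3 * z 2 k)). auto using exu.
      apply (ex_series_scal_l (1/3) (z 2)). auto using exz.
    - rewrite (Series_ext _ _ EA), (Series_ext _ _ EB).
      rewrite Series_minus, Series_plus, Series_scal_l; auto using exu, exv, exz.
      2: apply (ex_series_scal_l (1/3) (z 2)); auto using exz.
      pose proof (key 2 H2). simpl in H. lra. }
  { intros C.
    assert (EC : forall k, C k = 9 * v 3 k + 7 * u 3 k).
    { intro k; unfold C, q, r, u, v; pose proof (powINR_nz k 3); assert (0 < INR (k+1)) by (apply lt_0_INR; lia); field; lra. }
    assert (ex1 : ex_series (fun k => 9 * v 3 k)) by (apply (ex_series_scal_l 9 (v 3)); auto using exv).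
    assert (ex2 : ex_series (fun k => 7 * u 3 k)) by (apply (ex_series_scal_l 7 (u 3)); auto using exu).
    split.
    - apply (ex_series_ext (fun k => 9 * v 3 k + 7 * u 3 k)); [intro; now rewrite EC|].
      apply (ex_series_plus _ _ ex1 ex2).
    - rewrite (Series_ext _ _ EC), Series_plus, !Series_scal_l; auto.
      pose proof (key 3 H3). simpl in H. unfold zeta. fold (z 3). lra. }
  { intros D.
    assert (ED : forall k, D k = 17 * v 4 k + 15 * u 4 k - 2 * z 4 k).
    { intro k; unfold D, q, r, u, v, z; pose proof (powINR_nz k 4); assert (0 < INR (k+1)) by (apply lt_0_INR; lia); field; lra. }
    assert (ex1 : ex_series (fun k => 17 * v 4 k)) by (apply (ex_series_scal_l 17 (v 4)); auto using exv).
    assert (ex2 : ex_series (fun k => 15 * u 4 k)) by (apply (ex_series_scal_l 15 (u 4)); auto using exu).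
    assert (ex3 : ex_series (fun k => 2 * z 4 k)) by (apply (ex_series_scal_l 2 (z 4)); auto using exz).
    assert (ex12 : ex_series (fun k => 17 * v 4 k + 15 * u 4 k)) by apply (ex_series_plus _ _ ex1 ex2).
    split.
    - apply (ex_series_ext (fun k => 17 * v 4 k + 15 * u 4 k - 2 * z 4 k)); [intro; now rewrite ED|].
      apply (ex_series_minus _ _ ex12 ex3).
    - rewrite (Series_ext _ _ ED), Series_minus, Series_plus, !Series_scal_l; auto.
      pose proof (key 4 H4). pose proof (key_eta 4 H4). simpl in H, H0.
      unfold eta. fold (e 4). lra. }
Qed.
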